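(* Let $R$ be a commutative ring with identity such that $4\le \gamma_t(\Gamma(R))<\infty$. Then $\gamma(\Gamma(R))=\gamma_t(\Gamma(R))$.
   Context: All rings are commutative with identity. The zero-divisor graph $\Gamma(R)$ has vertex set $Z(R)^*$ (nonzero zero-divisors); distinct $r,s$ are adjacent iff $rs=0$, and $x$ is adjacent to itself iff $x^2=0$. A dominating set is $X\subseteq Z(R)^*$ such that every vertex not in $X$ is adjacent to some element of $X$; a total dominating set is $X$ such that every vertex (including those in $X$) is adjacent to some element of $X$ (self-adjacency counts). $\gamma,\gamma_t$ are the respective minimum cardinalities. *)

(* Defs.v *)
From mathcomp Require Import all_boot all_algebra.
Set Implicit Arguments. Unset Strict Implicit. Unset Printing Implicit Defensive.
Import GRing.Theory.
Local Open Scope ring_scope.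

Definition zero_divisor (R : comPzRingType) (x : R) : Prop :=
  exists y : R, y != 0 /\ x * y = 0.

Definition zdg_vertex (R : comPzRingType) (x : R) : Prop :=
  x != 0 /\ zero_divisor x.

(* adjacency in Gamma(R): r ~ s iff r s = 0 (for r = s this is the loop x^2 = 0) *)
Definition zdg_adj (R : comPzRingType) (r s : R) : Prop := r * s = 0.

Definition zdg_dominating (R : comPzRingType) (X : seq R) : Prop :=
  (forall x, x \in X -> zdg_vertex x) /\
  (forall v, zdg_vertex v -> v \notin X -> exists2 x, x \in X & zdg_adj v x).

Definition zdg_total_dominating (R : comPzRingType) (X : seq R) : Prop :=
  (forall x, x \in X -> zdg_vertex x) /\
  (forall v, zdg_vertex v -> exists2 x, x \in X & zdg_adj v x).

Definition zdg_domination_number (R : comPzRingType) (n : nat) : Prop :=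
  (exists X : seq R, [/\ uniq X, zdg_dominating X & size X = n]) /\
  (forall X : seq R, zdg_dominating X -> (n <= size X)%N).

Definition zdg_total_domination_number (R : comPzRingType) (n : nat) : Prop :=
  (exists X : seq R, [/\ uniq X, zdg_total_dominating X & size X = n]) /\
  (forall X : seq R, zdg_total_dominating X -> (n <= size X)%N).

(* Main.v *)
Require Import Defs.
From mathcomp Require Import all_boot all_algebra.
From mathcomp Require Import ring.
From Stdlib Require Import Classical.
Set Implicit Arguments. Unset Strict Implicit. Unset Printing Implicit Defensive.
Import GRing.Theory.
Local Open Scope ring_scope.

Section Aux.
Variable R : comPzRingType.

Definition iso (X : seq R) (x : R) : bool := all (fun u => x * u != 0) X.

Lemma isoP (X : seq R) x u : iso X x -> u \in X -> x * u != 0.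
Proof. by move=> /allP H /H. Qed.

Lemma size_repl (X : seq R) x w : x \in X ->
  (size (w :: filter (predC1 x) X) <= size X)%N.
Proof.
move=> xX /=; rewrite size_filter -(count_predC (predC1 x) X) -addn1 leq_add2l.
rewrite lt0n; apply/negP => /eqP H.
have : count (pred1 x) X = 0%N.
  by rewrite -H; apply: eq_count => y /=; rewrite negbK.
by move/count_memPn; rewrite xX.
Qed.

Lemma count_mono (T : eqType) (a b : pred T) (s : seq T) :
  (forall y, y \in s -> a y -> b y) -> (count a s <= count b s)%N.
Proof.
elim: s => //= y s IH H.
apply: leq_add; last by apply: IH => z zs; apply: H; rewrite inE zs orbT.
case ay: (a y) => //=; by rewrite (H y) ?inE ?eqxx.
Qed.

Lemma count_filter_lt (T : eqType) (a : pred T) (s : seq T) x :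
  x \in s -> a x -> (count a (filter (predC1 x) s) < count a s)%N.
Proof.
elim: s => //= y s IH; rewrite inE => /orP [/eqP <-|xs] ax.
  rewrite eqxx /= ax add1n ltnS count_filter.
  by apply: count_mono => z _ /andP [].
case: (eqVneq y x) => [->|nyx] /=.
  rewrite ax add1n ltnS count_filter.
  by apply: count_mono => z _ /andP [].
rewrite ltn_add2l; exact: IH.
Qed.

Lemma count_repl (X : seq R) x w : x \in X -> iso X x ->
  ~~ iso (w :: filter (predC1 x) X) w ->
  (count (iso (w :: filter (predC1 x) X)) (w :: filter (predC1 x) X)
     < count (iso X) X)%N.
Proof.
move=> xX ix; set X' := w :: _ => nw.
rewrite -[count _ X']/(iso X' w + count (iso X') (filter (predC1 x) X))%N.
rewrite (negbTE nw) add0n.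
apply: (@leq_ltn_trans (count (iso X) (filter (predC1 x) X))).
  apply: count_mono => y; rewrite mem_filter => /andP [ny yX] iy.
  apply/allP => u uX.
  case: (eqVneq u x) => [->|nux].
    by rewrite mulrC; apply: isoP ix yX.
  apply: isoP iy _; by rewrite inE mem_filter /= nux uX orbT.
exact: count_filter_lt.
Qed.


Lemma dom_repl (X : seq R) x w : zdg_dominating X -> x \in X ->
  zdg_vertex w -> x * w = 0 ->
  (forall d, zdg_vertex d -> d \notin X -> d * x = 0 ->
     exists2 t, t \in w :: filter (predC1 x) X & d * t = 0) ->
  zdg_dominating (w :: filter (predC1 x) X).
Proof.
move=> [HX1 HX2] xX vw xw Hd; split.
  by move=> y; rewrite inE mem_filter => /orP [/eqP ->|/andP [_ /HX1]].
move=> v vv; rewrite inE mem_filter negb_or negb_and /= negbK => /andP [nvw H].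
case: (boolP (v \in X)) => vX.
  move: H; rewrite vX orbF => /eqP ->.
  by exists w; rewrite ?mem_head.
have [u uX vu] := HX2 v vv vX.
case: (eqVneq u x) => [eux|nux].
  by apply: Hd; rewrite // -eux.
by exists u; rewrite // inE mem_filter /= nux uX orbT.
Qed.

Lemma seq_choice (T : eqType) (P : T -> T -> Prop) (Y : seq T) :
  (forall u, u \in Y -> exists t, P u t) ->
  exists Z : seq T, [/\ size Z = size Y,
    (forall u, u \in Y -> exists2 t, t \in Z & P u t) &
    (forall t, t \in Z -> exists2 u, u \in Y & P u t)].
Proof.
elim: Y => [|y Y IH] H.
  by exists [::]; split => // u.
have [|Z [sZ H1 H2]] := IH.
  by move=> u uY; apply: H; rewrite inE uY orbT.
have [t Pt] := H y (mem_head _ _).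
exists (t :: Z); split => /=; first by rewrite sZ.
  move=> u; rewrite inE => /orP [/eqP ->|uY]; first by exists t; rewrite ?mem_head.
  by have [t' t'Z Pt'] := H1 u uY; exists t'; rewrite // inE t'Z orbT.
move=> t'; rewrite inE => /orP [/eqP ->|t'Z]; first by exists y; rewrite ?mem_head.
by have [u uY Pu] := H2 t' t'Z; exists u; rewrite // inE uY orbT.
Qed.

Definition step_concl (X : seq R) :=
  (exists X', [/\ zdg_dominating X', (size X' <= size X)%N &
                 (count (iso X') X' < count (iso X) X)%N]) \/
  (exists T : seq R, zdg_total_dominating T /\ (size T <= size X)%N) \/
  (exists T : seq R, zdg_total_dominating T /\ (size T <= 2)%N).

Lemma repl_concl (X : seq R) x w : zdg_dominating X -> x \in X -> iso X x ->
  zdg_vertex w -> x * w = 0 ->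
  (forall d, zdg_vertex d -> d \notin X -> d * x = 0 ->
     exists2 t, t \in w :: filter (predC1 x) X & d * t = 0) ->
  ~~ iso (w :: filter (predC1 x) X) w -> step_concl X.
Proof.
move=> HX xX ix vw xw Hd nw; left; exists (w :: filter (predC1 x) X); split.
- exact: dom_repl.
- exact: size_repl.
- exact: count_repl.
Qed.

Lemma not_iso (X : seq R) w t : t \in X -> w * t = 0 -> ~~ iso X w.
Proof. by move=> tX wt; apply/allPn; exists t; rewrite // negbK wt. Qed.


Lemma case1 (X : seq R) x u0 : zdg_dominating X -> x \in X -> iso X x ->
  u0 \in X -> x * x * u0 = 0 -> step_concl X.
Proof.
move=> HX xX ix u0X H.
have w0 : x * u0 != 0 := isoP ix u0X.
have ww : (x * u0) * (x * u0) = 0.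
  by rewrite (_ : (x*u0)*(x*u0) = (x*x*u0)*u0); [rewrite H mul0r | ring].
apply: (@repl_concl X x (x * u0)) => //.
- by split => //; exists (x * u0); split.
- by rewrite mulrA.
- move=> d _ _ dx; exists (x * u0); first exact: mem_head.
  by rewrite mulrA dx mul0r.
- by apply: not_iso ww; exact: mem_head.
Qed.

Lemma case2a (X : seq R) x : zdg_dominating X -> x \in X -> iso X x ->
  (forall u, u \in X -> x * x * u != 0) -> x * x != x -> step_concl X.
Proof.
move=> HX xX ix Hu nxx.
have [xn0 [y [yn0 xy]]] := HX.1 x xX.
have xxX : x * x \in X.
  apply/negPn/negP => nX.
  have vxx : zdg_vertex (x * x).
    split; last by exists y; split => //; rewrite -mulrA xy mulr0.
    apply/eqP => xx0; move: (Hu x xX); by rewrite xx0 mul0r eqxx.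
  have [u uX] := HX.2 _ vxx nX; rewrite /zdg_adj => /eqP.
  by rewrite (negbTE (Hu u uX)).
have xxX' : x * x \in y :: filter (predC1 x) X.
  by rewrite inE mem_filter /= nxx xxX orbT.
apply: (@repl_concl X x y) => //.
- by split => //; exists x; split => //; rewrite mulrC.
- move=> d _ _ dx; exists (x * x) => //; by rewrite mulrA dx mul0r.
- by apply: not_iso xxX' _; rewrite mulrA (mulrC y x) xy mul0r.
Qed.

Lemma case2bi (X : seq R) e z c : zdg_dominating X -> e \in X -> iso X e ->
  e * e = e -> z != 0 -> c != 0 -> e * z = 0 -> e * c = 0 -> z * c = 0 ->
  step_concl X.
Proof.
move=> HX eX ie ee zn cn ez ec zc.
have [en0 _] := HX.1 e eX.
have key : forall u, (e + z) * u = 0 -> e * u = 0.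
  move=> u H; have : e * ((e + z) * u) = (e * e) * u + (e * z) * u by ring.
  by rewrite H mulr0 ee ez mul0r addr0 => /esym.
have iez : iso X (e + z).
  apply/allP => u uX; apply/eqP => /key /eqP.
  by rewrite (negbTE (isoP ie uX)).
have ezn0 : e + z != 0.
  apply/eqP => H; move: (key e); rewrite H mul0r ee => /(_ erefl) /eqP.
  by rewrite (negbTE en0).
have vez : zdg_vertex (e + z).
  by split => //; exists c; split => //; rewrite mulrDl ec zc addr0.
have ezX : e + z \in X.
  apply/negPn/negP => nX; have [u uX H] := HX.2 _ vez nX.
  by move: (isoP ie uX); rewrite (key u H) eqxx.
have neez : e != e + z.
  apply/eqP => H; have : e + z - e = z by ring.
  by rewrite -H subrr => z0; move: zn; rewrite -z0 eqxx.
have eX' : e \in c :: filter (predC1 (e + z)) X.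
  by rewrite inE mem_filter /= neez eX orbT.
apply: (@repl_concl X (e + z) c) => //.
- by split => //; exists e; split => //; rewrite mulrC.
- by rewrite mulrDl ec zc addr0.
- move=> d _ _ dez; exists e => //.
  have : (d * (e + z)) * e = d * (e * e) + d * (e * z) by ring.
  by rewrite dez mul0r ee ez mulr0 addr0 => /esym.
- by apply: not_iso eX' _; rewrite mulrC.
Qed.


Lemma case2bii (X : seq R) e : zdg_dominating X -> e \in X -> e * e = e ->
  (forall z c, z != 0 -> c != 0 -> e * z = 0 -> e * c = 0 -> z * c != 0) ->
  step_concl X.
Proof.
move=> HX eX ee Dom.
have [en0 [y0 [y0n ey0]]] := HX.1 e eX.
set f := 1 - e.
have ef : e * f = 0 by rewrite /f mulrBr mulr1 ee subrr.
have fn0 : f != 0.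
  apply/eqP => f0.
  have e1 : e = 1.
    by apply/eqP; rewrite -subr_eq0 -opprB -/f f0 oppr0 eqxx.
  by move: y0n; rewrite -ey0 e1 mul1r eqxx.
have Df : forall a b, a * b = 0 -> a * f != 0 -> b * f = 0.
  move=> a b ab af; apply/eqP/negPn/negP => bf.
  have := Dom _ _ af bf.
  rewrite [e * (a * f)]mulrCA [e * (b * f)]mulrCA ef !mulr0 => /(_ erefl erefl).
  by rewrite mulrACA ab mul0r eqxx.
have Htot : forall S : seq R, (forall t, t \in S -> t != 0 /\ t * f = 0) ->
   forall t0, t0 \in S ->
   (forall u, u \in X -> u != e -> u * f = 0 -> u \in S) ->
   (forall u, u \in X -> u != e -> u * f != 0 -> exists2 t, t \in S & u * t = 0) ->
   zdg_total_dominating (f :: S).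
  move=> S HS t0 t0S HS2 HS3; split.
    move=> t; rewrite inE => /orP [/eqP ->|tS].
      by split => //; exists e; split => //; rewrite mulrC.
    by have [tn tf] := HS t tS; split => //; exists f; split.
  move=> v vv; have [vn0 _] := vv.
  case: (eqVneq (v * e) 0) => ve.
    exists t0; first by rewrite inE t0S orbT.
    have [_ t0f] := HS t0 t0S; rewrite /zdg_adj.
    rewrite (_ : v * t0 = t0 * (v * e) + v * (t0 * f)).
      by rewrite ve t0f !mulr0 addr0.
    by rewrite /f; ring.
  case: (eqVneq (v * f) 0) => vf.
    by exists f; rewrite ?mem_head.
  case: (boolP (v \in X)) => vX.
    have nve : v != e by apply/eqP => H; move: vf; rewrite H ef eqxx.
    have [t tS vt] := HS3 v vX nve vf.
    by exists t => //; rewrite inE tS orbT.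
  have [u uX vu] := HX.2 v vv vX.
  have uf := Df v u vu vf.
  have nue : u != e by apply/eqP => H; move: ve; rewrite -H vu eqxx.
  by exists u => //; rewrite inE (HS2 u uX nue uf) orbT.
pose P u t := [/\ u * f = 0 -> t = u, u * f != 0 -> u * t = 0, t != 0 & t * f = 0].
have HP : forall u, u \in filter (predC1 e) X -> exists t, P u t.
  move=> u; rewrite mem_filter => /andP [_ uX].
  have [un0 [y [yn uy]]] := HX.1 u uX.
  case: (eqVneq (u * f) 0) => uf.
    by exists u; split => //; rewrite uf eqxx.
  exists y; split => //; first by move=> H; move: uf; rewrite H eqxx.
  exact: Df uy uf.
have [Z [sZ HZ1 HZ2]] := seq_choice HP.
have inY : forall u, u \in X -> u != e -> u \in filter (predC1 e) X.
  by move=> u uX ue; rewrite mem_filter /= ue uX.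
move: sZ HZ1 HZ2; case: Z => [|t0 Z'] sZ HZ1 HZ2.
  right; right; exists [:: f; e]; split => //.
  apply: (Htot [:: e] _ e).
  - by move=> t; rewrite inE => /eqP ->; split.
  - exact: mem_head.
  - by move=> u uX ue _; have [t] := HZ1 u (inY u uX ue).
  - by move=> u uX ue _; have [t] := HZ1 u (inY u uX ue).
right; left; exists (f :: t0 :: Z'); split.
  apply: (Htot (t0 :: Z') _ t0).
  - by move=> t /HZ2 [u _ [_ _ ? ?]].
  - exact: mem_head.
  - move=> u uX ue uf; have [t tZ [H _ _ _]] := HZ1 u (inY u uX ue).
    by rewrite -(H uf).
  - move=> u uX ue uf; have [t tZ [_ H _ _]] := HZ1 u (inY u uX ue).
    by exists t => //; apply: H.
rewrite (_ : size (f :: t0 :: Z') = size (f :: filter (predC1 e) X)).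
  exact: size_repl.
by rewrite /= -sZ.
Qed.

Lemma step (X : seq R) x : zdg_dominating X -> x \in X -> iso X x -> step_concl X.
Proof.
move=> HX xX ix.
case: (boolP (has (fun u => x * x * u == 0) X)) => [/hasP [u uX /eqP H]|nh].
  exact: (case1 HX xX ix uX H).
have Hu : forall u, u \in X -> x * x * u != 0 by move/hasPn: nh.
case: (eqVneq (x * x) x) => xx; last exact: (case2a HX xX ix Hu xx).
case: (classic (exists z c, [/\ z != 0, c != 0, x * z = 0, x * c = 0 & z * c = 0]))
  => [[z [c [zn cn xz xc zc]]]|N].
  exact: (case2bi HX xX ix xx zn cn xz xc zc).
apply: (case2bii HX xX xx) => z c zn cn xz xc; apply/eqP => zc.
by apply: N; exists z, c; split.
Qed.

Lemma total_of_noiso (X : seq R) : zdg_dominating X -> ~~ has (iso X) X ->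
  zdg_total_dominating X.
Proof.
move=> HX nh; split; first exact: HX.1.
move=> v vv; case: (boolP (v \in X)) => vX; last exact: HX.2.
have : ~~ iso X v by move/hasPn: nh => /(_ v vX).
by move/allPn => [u uX]; rewrite negbK => /eqP; exists u.
Qed.

Lemma key (n : nat) :
  (forall X : seq R, zdg_total_dominating X -> (n <= size X)%N) -> (3 <= n)%N ->
  forall m (X : seq R), (count (iso X) X <= m)%N -> zdg_dominating X ->
  (n <= size X)%N.
Proof.
move=> Hmin n3; elim=> [|m IH] X cX HX;
  (case: (boolP (has (iso X) X)) => [hX|nh]; last by apply: Hmin; apply: total_of_noiso).
  by move: cX; rewrite leqn0 => /eqP c0; move: hX; rewrite has_count c0.
move/hasP: hX => [x xX ix].
have [[X' [HX' sX' cX']]|[[T [HT sT]]|[T [HT sT]]]] := step HX xX ix.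
- apply: leq_trans (IH X' _ HX') sX'.
  by rewrite -ltnS; apply: leq_trans cX' cX.
- exact: leq_trans (Hmin T HT) sT.
- by have := leq_trans (Hmin T HT) sT; rewrite leqNgt (leq_trans _ n3).
Qed.

End Aux.

Theorem theorem4p2 (R : comPzRingType) (n : nat) :
  zdg_total_domination_number R n -> (4 <= n)%N ->
  zdg_domination_number R n.
Proof.
move=> [[X0 [uX0 [tX1 tX2] sX0]] Hmin] n4; split.
  exists X0; split => //; split => // v vv _; exact: tX2.
move=> X HX; apply: (key Hmin _ (leqnn _) HX).
exact: leq_trans n4.
Qed.
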